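(* Let $\{S;\tilde w_1,\dots,\tilde w_N;p_1,\dots,p_N\}$ be a DIFS, and suppose that for some index $i$ the minimal absorbing set $\mathcal M[\tilde w_i,S]$ exists. Let $\mathcal A_k$ be a recurrent communication class of the associated Markov chain. If there is $\tilde x\in S$ with $\tilde x\in\mathcal A_k$ and $\tilde x\in\mathcal B[\mathcal M_j[\tilde w_i,S]]$ for some component $\mathcal M_j[\tilde w_i,S]$ of $\mathcal M[\tilde w_i,S]$, then $\mathcal M_j[\tilde w_i,S]\subset\mathcal A_k$.
   Context: $\mathcal D^n(\delta)=\{\delta m:m\in\mathbb Z^n\}$ for fixed $\delta>0$; $\mathbb N=\{1,2,\dots\}$. A DIFS $\{S;\tilde w_1,\dots,\tilde w_N;p_1,\dots,p_N\}$ consists of $S\subset\mathcal D^n(\delta)$, maps $\tilde w_i:S\to S$, and functions $p_i:S\to(0,1]$ with $\sum_ip_i(\tilde x)=1$ for every $\tilde x\in S$; its associated Markov chain on $S$ has transition probabilities $P(\tilde x,\tilde y)=\sum_ip_i(\tilde x)\mathbf 1_{\{\tilde y\}}(\tilde w_i(\tilde x))$. Accessibility: $P^k(\tilde x,\tilde y)>0$ for some $k\ge1$; a communication class is a maximal nonempty set of mutually accessible states; a state is recurrent if the chain started there returns to it in finitely many steps a.s.; a recurrent communication class is a communication class of recurrent states. Absorbing sets: for a map $\tilde w$ and nonempty $C$ with $\tilde w(C)\subset C$, a set $\Lambda\subset C$ is absorbing for $\tilde w$ in $C$ if for each $\tilde x\in C$ there is $N$ with $\tilde w^{\circ i}(\tilde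 x)\in\Lambda$ for all $i\ge N$. If the intersection of all absorbing sets for $\tilde w$ in $C$ is itself absorbing in $C$, it is the minimal absorbing set $\mathcal M[\tilde w,C]$ (and it is said to exist). Its components are the equivalence classes of the relation $\tilde x\sim\tilde y\iff\tilde w^{\circ j}(\tilde x)=\tilde w^{\circ l}(\tilde y)$ for some $j,l\in\mathbb N$; the basin of a component $\mathcal M_j$ is $\mathcal B[\mathcal M_j]=\{\tilde x\in C:\exists i\in\mathbb N,\ \tilde w^{\circ i}(\tilde x)\in\mathcal M_j\}$. *)

(* Defs.v *)
From HB Require Import structures.
From mathcomp Require Import all_boot all_order all_algebra.
From mathcomp Require Import all_classical all_reals all_analysis.
Set Implicit Arguments. Unset Strict Implicit. Unset Printing Implicit Defensive.
Import Order.TTheory GRing.Theory Num.Theory numFieldNormedType.Exports.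
Local Open Scope classical_set_scope.
Local Open Scope ring_scope.

Section DIFS.
Variables (R : realType) (n N : nat).
Notation pt := 'rV[R]_n.

Definition lattice (delta : R) : set pt :=
  [set x | exists m : 'rV[int]_n, x = delta *: map_mx (fun z : int => z%:~R) m].

Definition is_DIFS (delta : R) (S : set pt) (w : 'I_N -> pt -> pt)
    (p : 'I_N -> pt -> R) : Prop :=
  [/\ 0 < delta, S `<=` lattice delta,
      (forall i x, S x -> S (w i x)),
      (forall i x, S x -> 0 < p i x <= 1) &
      (forall x, S x -> \sum_(i < N) p i x = 1)].

Variables (w : 'I_N -> pt -> pt) (p : 'I_N -> pt -> R).

Fixpoint path_end (x : pt) (s : seq 'I_N) : pt :=
  if s is i :: s' then path_end (w i x) s' else x.

Fixpoint path_weight (x : pt) (s : seq 'I_N) : R :=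
  if s is i :: s' then p i x * path_weight (w i x) s' else 1.

Fixpoint path_states (x : pt) (s : seq 'I_N) : seq pt :=
  if s is i :: s' then w i x :: path_states (w i x) s' else [::].

Definition Pk (k : nat) (x y : pt) : R :=
  \sum_(s : k.-tuple 'I_N | path_end x s == y) path_weight x s.

Definition accessible (x y : pt) : Prop := exists k, (1 <= k)%N /\ 0 < Pk k x y.

(* Probability that the chain started at x first returns to x at step k. *)
Definition first_return (k : nat) (x : pt) : R :=
  \sum_(s : k.-tuple 'I_N |
          (path_end x s == x) && (x \notin take k.-1 (path_states x s)))
     path_weight x s.

(* x is recurrent: P_x(return in finitely many steps) = 1, i.e.
   lim_m P_x(return within m steps) = 1. *)
Definition recurrent (x : pt) : Prop :=
  (fun m : nat => \sum_(1 <= k < m.+1) first_return k x) @ \oo --> (1 : R).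

Definition mutually_accessible (A : set pt) : Prop :=
  forall x y, A x -> A y -> accessible x y /\ accessible y x.

Definition comm_class (S : set pt) (A : set pt) : Prop :=
  [/\ A !=set0, A `<=` S, mutually_accessible A &
      forall B, A `<=` B -> B `<=` S -> mutually_accessible B -> B = A].

Definition recurrent_comm_class (S : set pt) (A : set pt) : Prop :=
  comm_class S A /\ (forall x, A x -> recurrent x).

End DIFS.

Section Absorbing.
Variables (T : Type) (f : T -> T).

Definition absorbing (C L : set T) : Prop :=
  L `<=` C /\
  forall x, C x -> exists K : nat, forall i, (K <= i)%N -> L (iter i f x).

Definition minimal_absorbing_set (C M : set T) : Prop :=
  f @` C `<=` C /\ C !=set0 /\
  M = \bigcap_(L in [set L | absorbing C L]) L /\ absorbing C M.

Definition sim_rel (x y : T) : Prop :=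
  exists j l : nat, [/\ (1 <= j)%N, (1 <= l)%N & iter j f x = iter l f y].

Definition component (M Mj : set T) : Prop :=
  exists y, M y /\ Mj = [set z | M z /\ sim_rel y z].

Definition basin (C Mj : set T) : set T :=
  [set x | C x /\ exists i : nat, (1 <= i)%N /\ Mj (iter i f x)].

End Absorbing.

(* Main.v *)
Require Import Defs.
From HB Require Import structures.
From mathcomp Require Import all_boot all_order all_algebra.
From mathcomp Require Import all_classical all_reals all_analysis.
From mathcomp Require Import lra.
Import Order.TTheory GRing.Theory Num.Theory.
Local Open Scope classical_set_scope.
Local Open Scope ring_scope.
Lemma sum_tupleS (R : realType) (N k : nat) (F : k.+1.-tuple 'I_N -> R) :
  \sum_(t : k.+1.-tuple 'I_N) F t =
  \sum_(j : 'I_N) \sum_(s : k.-tuple 'I_N) F (cons_tuple j s).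
Proof.
rewrite pair_big /=.
rewrite (reindex (fun p : 'I_N * k.-tuple 'I_N => cons_tuple p.1 p.2)) //=.
exists (fun t : k.+1.-tuple 'I_N => (thead t, behead_tuple t)).
  by move=> [j s] _ /=; congr pair => //; apply: val_inj.
by move=> t _; rewrite [RHS]tuple_eta; apply: val_inj.
Qed.
Definition rr {R : realType} {n N : nat} (w : 'I_N -> 'rV[R]_n -> 'rV[R]_n)
  (p : 'I_N -> 'rV[R]_n -> R) (x : 'rV[R]_n) (k : nat) (z : 'rV[R]_n) : R :=
  \sum_(s : k.-tuple 'I_N |
          (path_end w z s == x) && (x \notin take k.-1 (path_states w z s)))
     path_weight w p z s.

Lemma rr_S (R : realType) (n N : nat) (w : 'I_N -> 'rV[R]_n -> 'rV[R]_n)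
  (p : 'I_N -> 'rV[R]_n -> R) (x : 'rV[R]_n) (k : nat) (z : 'rV[R]_n) :
  rr w p x k.+1 z = \sum_(j < N) p j z *
     (if k is 0 then (w j z == x)%:R else (w j z != x)%:R * rr w p x k (w j z)).
Proof.
rewrite /rr big_mkcond sum_tupleS; apply: eq_bigr => j _.
case: k => [|k] /=.
  rewrite (eq_bigl (pred1 [tuple])); last by move=> s; rewrite /= [s]tuple0; apply/esym/eqP.
  rewrite big_pred1_eq /= mulr1.
  by case: eqP => _; rewrite ?mulr1 ?mulr0.
rewrite [in RHS]big_mkcond !mulr_sumr; apply: eq_bigr => s _ /=.
rewrite inE negb_or [x == w j z]eq_sym.
case: (w j z != x) => /=; first by rewrite mul1r; case: ifP; rewrite ?mulr0.
by rewrite andbF mul0r mulr0.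
Qed.
Definition Rs {R : realType} {n N : nat} (w : 'I_N -> 'rV[R]_n -> 'rV[R]_n)
  (p : 'I_N -> 'rV[R]_n -> R) (x : 'rV[R]_n) (m : nat) (z : 'rV[R]_n) : R :=
  \sum_(1 <= k < m.+1) rr w p x k z.

Lemma Rs_S (R : realType) (n N : nat) (w : 'I_N -> 'rV[R]_n -> 'rV[R]_n)
  (p : 'I_N -> 'rV[R]_n -> R) (x : 'rV[R]_n) (m : nat) (z : 'rV[R]_n) :
  Rs w p x m.+1 z = \sum_(j < N) p j z *
     ((w j z == x)%:R + (w j z != x)%:R * Rs w p x m (w j z)).
Proof.
rewrite /Rs big_nat_recl // rr_S /=.
rewrite (eq_big_nat _ _ (F2 := fun i => \sum_(j < N) p j z *
            ((w j z != x)%:R * rr w p x i (w j z)))); last first.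
  by move=> [|i] //= _; rewrite rr_S.
rewrite exchange_big /= -big_split /=; apply: eq_bigr => j _.
by rewrite mulrDr -!mulr_sumr.
Qed.

Lemma Rs_0 (R : realType) (n N : nat) (w : 'I_N -> 'rV[R]_n -> 'rV[R]_n)
  (p : 'I_N -> 'rV[R]_n -> R) (x : 'rV[R]_n) (z : 'rV[R]_n) :
  Rs w p x 0 z = 0.
Proof. by rewrite /Rs big_geq. Qed.
Lemma weight_bnd (R : realType) (n N : nat) (delta : R) (S : set 'rV[R]_n)
    (w : 'I_N -> 'rV[R]_n -> 'rV[R]_n) (p : 'I_N -> 'rV[R]_n -> R)
    (HD : is_DIFS delta S w p) (t : seq 'I_N) (z : 'rV[R]_n) :
  S z -> 0 < path_weight w p z t <= 1.
Proof.
case: HD => _ _ Sw Hp _.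
elim: t z => [|j t IH] z Sz /=; first by rewrite ltr01 lexx.
have /andP [h1 h2] := Hp j z Sz.
have /andP [h3 h4] := IH _ (Sw j z Sz).
rewrite mulr_gt0 //= -[1]mulr1; apply: ler_pM => //; exact: ltW.
Qed.
Arguments weight_bnd {R n N delta S w p}.

Lemma Rs_bnd (R : realType) (n N : nat) (delta : R) (S : set 'rV[R]_n)
    (w : 'I_N -> 'rV[R]_n -> 'rV[R]_n) (p : 'I_N -> 'rV[R]_n -> R)
    (HD : is_DIFS delta S w p) (x : 'rV[R]_n) (m : nat) (z : 'rV[R]_n) :
  S z -> 0 <= Rs w p x m z <= 1.
Proof.
case: HD => _ _ Sw Hp Hs.
elim: m z => [|m IH] z Sz; first by rewrite Rs_0 lexx ler01.
rewrite Rs_S; apply/andP; split.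
  apply: sumr_ge0 => j _; have /andP [h1 _] := Hp j z Sz.
  have /andP [h3 _] := IH _ (Sw j z Sz).
  by apply: mulr_ge0; [exact: ltW | case: eqP => _ /=; rewrite ?mulr0n ?mulr1n ?mul1r ?mul0r ?addr0 ?add0r //].
rewrite -[leRHS](Hs z Sz); apply: ler_sum => j _.
have /andP [h1 _] := Hp j z Sz.
have /andP [_ h4] := IH _ (Sw j z Sz).
rewrite -[leRHS]mulr1; apply: ler_wpM2l; first exact: ltW.
by case: eqP => _ /=; rewrite ?mulr0n ?mulr1n ?mul1r ?mul0r ?addr0 ?add0r //.
Qed.
Arguments Rs_bnd {R n N delta S w p}.

Lemma Rs_closed0 (R : realType) (n N : nat)
    (w : 'I_N -> 'rV[R]_n -> 'rV[R]_n) (p : 'I_N -> 'rV[R]_n -> R)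
    (x : 'rV[R]_n) (B : set 'rV[R]_n)
    (HB : forall v j, B v -> B (w j v) /\ w j v != x) (m : nat) (v : 'rV[R]_n) :
  B v -> Rs w p x m v = 0.
Proof.
elim: m v => [|m IH] v Bv; first by rewrite Rs_0.
rewrite Rs_S big1 // => j _; have [h1 h2] := HB v j Bv.
by rewrite (negbTE h2) /= IH // mulr0 addr0 mulr0.
Qed.

Lemma Rs_good (R : realType) (n N : nat) (delta : R) (S : set 'rV[R]_n)
    (w : 'I_N -> 'rV[R]_n -> 'rV[R]_n) (p : 'I_N -> 'rV[R]_n -> R)
    (HD : is_DIFS delta S w p) (x : 'rV[R]_n) (B : set 'rV[R]_n)
    (HB : forall v j, B v -> B (w j v) /\ w j v != x) (t : seq 'I_N) :
  forall (m : nat) (z : 'rV[R]_n), S z -> B (path_end w z t) ->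
  x \notin path_states w z t -> Rs w p x m z <= 1 - path_weight w p z t.
Proof.
have HD' := HD; case: HD' => _ _ Sw Hp Hs.
elim: t => [|j t IH] m z Sz /= Be Hx.
  by rewrite (@Rs_closed0 _ _ _ w p x B HB m z Be) subrr.
case: m => [|m]; first by rewrite Rs_0 subr_ge0; case/andP: (weight_bnd HD (j :: t) z Sz).
rewrite inE negb_or in Hx; case/andP: Hx => Hx1 Hx2.
have wb := weight_bnd HD t (w j z) (Sw j z Sz).
rewrite Rs_S; apply: (@le_trans _ _ (\sum_(k < N) p k z *
   (if k == j then 1 - path_weight w p (w j z) t else 1))).
  apply: ler_sum => k _; have /andP [hp _] := Hp k z Sz.
  apply: ler_wpM2l; first exact: ltW.
  have /andP [_ h4] := Rs_bnd HD x m (w k z) (Sw k z Sz).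
  case: (eqVneq k j) => [->|kj].
    rewrite eq_sym in Hx1; rewrite (negbTE Hx1).
    rewrite /= ?mulr0n ?mulr1n ?add0r ?mul1r. exact: IH (Sw j z Sz) Be Hx2.
  by case: eqP => _ /=; rewrite ?mulr0n ?mulr1n ?mul1r ?mul0r ?addr0 ?add0r.
rewrite (bigD1 j) //= eqxx.
rewrite (eq_bigr (fun i => p i z)); last by move=> k /negbTE ->; rewrite mulr1.
have Hs' := Hs z Sz; rewrite (bigD1 j) //= in Hs'.
rewrite mulrBr mulr1; lra.
Qed.
Arguments Rs_good {R n N delta S w p}.
Lemma path_end_cat {R : realType} {n N : nat} (w : 'I_N -> 'rV[R]_n -> 'rV[R]_n)
  (u : 'rV[R]_n) (s1 s2 : seq 'I_N) :
  path_end w u (s1 ++ s2) = path_end w (path_end w u s1) s2.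
Proof. by elim: s1 u => [|j s IH] u //=. Qed.

Lemma path_end_nseq {R : realType} {n N : nat} (w : 'I_N -> 'rV[R]_n -> 'rV[R]_n)
  (j : 'I_N) (k : nat) (u : 'rV[R]_n) :
  path_end w u (nseq k j) = iter k (w j) u.
Proof. by elim: k u => [|k IH] u //; rewrite iterSr -IH. Qed.

Lemma acc_of_seq (R : realType) (n N : nat) (delta : R) (S : set 'rV[R]_n)
    (w : 'I_N -> 'rV[R]_n -> 'rV[R]_n) (p : 'I_N -> 'rV[R]_n -> R)
    (HD : is_DIFS delta S w p) (u : 'rV[R]_n) (s : seq 'I_N) :
  S u -> (1 <= size s)%N -> accessible w p u (path_end w u s).
Proof.
move=> Su hs; exists (size s); split => //.
rewrite /Pk (bigD1 (in_tuple s)) //=.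
apply: ltr_pwDl; first by case/andP: (weight_bnd HD s u Su).
apply: sumr_ge0 => t _; case/andP: (weight_bnd HD t u Su) => h _; exact: ltW.
Qed.
Arguments acc_of_seq {R n N delta S w p}.

Lemma seq_of_acc (R : realType) (n N : nat)
    (w : 'I_N -> 'rV[R]_n -> 'rV[R]_n) (p : 'I_N -> 'rV[R]_n -> R)
    (u v : 'rV[R]_n) :
  accessible w p u v -> exists s : seq 'I_N, (1 <= size s)%N /\ path_end w u s = v.
Proof.
move=> [k [k1 hk]].
case: (boolP [exists t : k.-tuple 'I_N, path_end w u t == v]).
  by move/existsP => [t /eqP ht]; exists (val t); rewrite size_tuple.
move/existsPn => H; rewrite /Pk big1 ?ltxx // in hk => t ht.
by move: (H t); rewrite ht.
Qed.
Arguments seq_of_acc {R n N w p u v}.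

Lemma acc_trans (R : realType) (n N : nat) (delta : R) (S : set 'rV[R]_n)
    (w : 'I_N -> 'rV[R]_n -> 'rV[R]_n) (p : 'I_N -> 'rV[R]_n -> R)
    (HD : is_DIFS delta S w p) (u v y : 'rV[R]_n) :
  S u -> accessible w p u v -> accessible w p v y -> accessible w p u y.
Proof.
move=> Su /seq_of_acc [s1 [h1 e1]] /seq_of_acc [s2 [h2 e2]].
rewrite -e2 -e1 -path_end_cat; apply: (acc_of_seq HD) => //.
by rewrite size_cat; apply: leq_trans h1 (leq_addr _ _).
Qed.
Arguments acc_trans {R n N delta S w p}.

Lemma iter_inv (T : Type) (f : T -> T) (S : set T) :
  (forall z, S z -> S (f z)) -> forall k z, S z -> S (iter k f z).
Proof. by move=> H; elim=> [|k IH] z Sz //=; apply: H; apply: IH. Qed.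

Lemma iter_period (T : Type) (f : T -> T) (y : T) (k q : nat) :
  iter k f y = y -> iter (q * k) f y = y.
Proof.
move=> h; elim: q => [|q IH] //=; by rewrite mulSn iterD IH.
Qed.

Lemma M_periodic (T : Type) (f : T -> T) (S M : set T)
    (HM : minimal_absorbing_set f S M) (y : T) :
  M y -> exists k, (1 <= k)%N /\ iter k f y = y.
Proof.
case: HM => HS [_ [HMe _]] My.
have Sf : forall z, S z -> S (f z) by move=> z Sz; apply: HS; exists z.
apply: contrapT => Hn.
pose L := [set z | S z /\ z <> y].
have absL : absorbing f S L.
  split; first by move=> z [].
  move=> z Sz; case: (pselect (exists i0, iter i0 f z = y)) => [[i0 hi0]|hno].
    exists i0.+1 => i hi; split; first exact: iter_inv.
    have -> : i = ((i - i0) + i0)%N by rewrite subnK // ltnW.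
    rewrite iterD hi0 => e; apply: Hn; exists (i - i0)%N; split => //.
    by rewrite subn_gt0.
  exists 0%N => i _; split; first exact: iter_inv.
  by move=> e; apply: hno; exists i.
have : L y by rewrite HMe in My; apply: My.
by case.
Qed.
Arguments M_periodic {T f S M}.
Lemma find_good {R : realType} {n N : nat} (w : 'I_N -> 'rV[R]_n -> 'rV[R]_n)
    (i : 'I_N) (x : 'rV[R]_n) (B : set 'rV[R]_n) (L : nat) :
  forall z, B (iter L (w i) z) ->
  (exists t, B (path_end w z t) /\ x \notin path_states w z t) \/
  (exists t, B (path_end w x t) /\ x \notin path_states w x t).
Proof.
elim: L => [|L IH] z Hz.
  by left; exists [::].
rewrite iterSr in Hz; case: (IH _ Hz) => [[t [h1 h2]]|]; last by right.
case: (eqVneq (w i z) x) => [e|ne].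
  by rewrite e in h1 h2; right; exists t.
left; exists (i :: t); split => //=.
by rewrite inE negb_or eq_sym ne.
Qed.

Theorem lemma5 (R : realType) (n N : nat) (delta : R) (S : set 'rV[R]_n)
    (w : 'I_N -> 'rV[R]_n -> 'rV[R]_n) (p : 'I_N -> 'rV[R]_n -> R)
    (HD : is_DIFS delta S w p)
    (i : 'I_N) (M : set 'rV[R]_n) (HM : minimal_absorbing_set (w i) S M)
    (A : set 'rV[R]_n) (HA : recurrent_comm_class w p S A)
    (Mj : set 'rV[R]_n) (HMj : component (w i) M Mj)
    (x : 'rV[R]_n) (xS : S x) (xA : A x) (xB : basin (w i) S Mj x) :
  Mj `<=` A.
Proof.
have HD' := HD; case: HD' => _ _ Sw Hp Hs.
have HM' := HM; case: HM' => _ [_ [_ [MS _]]].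
case: HA => [[_ AS Amut Amax] Arec].
case: HMj => y0 [My0 eMj].
case: xB => _ [m [m1 Hm]].
move=> y Mjy.
rewrite eMj in Hm Mjy.
case: Hm => Mz [j1 [l1 [_ hl1 e1]]].
case: Mjy => My [j2 [l2 [_ _ e2]]].
have [py [py1 epy]] := M_periodic HM y My.
set z := iter m (w i) x in Mz e1.
have eab : iter (j2 + l1) (w i) z = iter (j1 + l2) (w i) y.
  by rewrite iterD -e1 -iterD addnC iterD e2 -iterD.
have Sy : S y by apply: MS.
set b := (j1 + l2)%N in eab.
have ey : y = iter (py * b - b + (j2 + l1) + m) (w i) x.
  rewrite iterD -/z iterD eab -iterD subnK; first by rewrite mulnC (@iter_period _ _ _ _ b epy).
  exact: leq_pmull.
set Lxy := (py * b - b + (j2 + l1) + m)%N in ey.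
have accxy : accessible w p x y.
  rewrite ey -path_end_nseq; apply: (acc_of_seq HD) => //.
  by rewrite size_nseq /Lxy addn_gt0 m1 orbT.
have accyx : accessible w p y x.
  apply: contrapT => Hn.
  pose B := [set v | S v /\ ~ accessible w p v x].
  have HB : forall v j, B v -> B (w j v) /\ w j v != x.
    move=> v j [Sv Hv]; split; first split.
    - exact: Sw.
    - move=> /seq_of_acc [s [_ es]]; apply: Hv.
      by rewrite -es -[path_end _ _ _]/(path_end w v (j :: s)); apply: (acc_of_seq HD).
    - apply/eqP => e; apply: Hv; rewrite -e -[w j v]/(path_end w v [:: j]).
      exact: (acc_of_seq HD).
  have By : B (iter Lxy (w i) x) by rewrite -ey.
  have [t [Bt Ht]] : exists t, B (path_end w x t) /\ x \notin path_states w x t.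
    by case: (@find_good _ _ _ w i x B Lxy x By).
  have hb := fun m => Rs_good HD x B HB t m x xS Bt Ht.
  have /andP [wt0 _] := weight_bnd HD t x xS.
  have hlt : 1 - path_weight w p x t < 1 by rewrite ltrBlDr ltrDl.
  have H := @cvgr_gt _ _ _ _ _ 1 (Arec x xA) _ hlt.
  have [k Hk] := filter_ex (H eventually_filter).
  have := hb k; rewrite /Rs => hk.
  by move: (lt_le_trans Hk hk); rewrite ltxx.
have Sacc : forall a, A a -> accessible w p a y /\ accessible w p y a.
  move=> a Aa; have [h1 h2] := Amut a x Aa xA; split.
    exact: (acc_trans HD _ _ _ (AS a Aa) h1 accxy).
  exact: (acc_trans HD _ _ _ Sy accyx h2).
have eB : A `|` [set y] = A.
  apply: Amax; first by move=> a Aa; left.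
    by move=> a [/AS //|->].
  move=> a c [Aa|->] [Ac|->].
  - exact: Amut.
  - exact: Sacc.
  - by have [h1 h2] := Sacc c Ac.
  - by split; apply: (acc_trans HD _ _ _ Sy accyx accxy).
by rewrite -eB; right.
Qed.
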